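(* There exist an environment $E$ and a total preorder $\succeq$ on $\Pi^E$ such that $\succeq\in\mathrm{Ord}_{\mathrm{ONMR}}(E)$ but $\succeq\notin\mathrm{Ord}_{\mathrm{FTR}}(E)$.
   Context: An environment is a tuple $E=(\mathcal S,\mathcal A,\mathcal T,\mathcal I)$ where $\mathcal S,\mathcal A$ are finite nonempty sets, $\mathcal T:\mathcal S\times\mathcal A\to\Delta(\mathcal S)$ and $\mathcal I\in\Delta(\mathcal S)$. A policy is a map $\pi:\mathcal S\to\Delta(\mathcal A)$ (stationary, possibly stochastic); $\Pi^E$ denotes the set of all policies. A trajectory $\xi=(s_0,a_0,s_1,a_1,\dots)\in\Xi:=\mathcal S\times(\mathcal A\times\mathcal S)^\omega$ is generated under $\pi$ by $s_0\sim\mathcal I$, $a_t\sim\pi(s_t)$, $s_{t+1}\sim\mathcal T(s_t,a_t)$; $\mathbb E^\pi_\xi$ denotes expectation under this distribution. An objective-specification formalism $X$ assigns to each environment $E$ a set of objective specifications, each inducing a total preorder $\succeq$ on $\Pi^E$; $\mathrm{Ord}_X(E)$ is the set of total preorders so induced. A specification defining a scalar $J:\Pi^E\to\mathbb R$ induces $\pi_1\succeq\pi_2\iff J(\pi_1)\ge J(\pi_2)$. ONMR: specification $(\mathcal R,f,\gamma)$ with $\mathcal R:\mathcal S\times\mathcal A\times\mathcal S\to\mathbb R$, $f:\mathbb R\to\mathbb R$, $\gamma\in[0,1)$; $J(\pi)=f\big(\mathbb E^\pi_\xi[\sum_{t=0}^\infty\gamma^t\mathcal R(s_t,a_t,s_{t+1})]\big)$.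 FTR: specification $(f)$ with $f:\Xi\to\mathbb R$ Borel measurable (product topology on $\Xi$) such that $\mathbb E^\pi_\xi[f(\xi)]$ is well-defined and finite for every policy; $J(\pi)=\mathbb E^\pi_\xi[f(\xi)]$. *)

(* Defs.v *)
From HB Require Import structures.
From mathcomp Require Import all_boot all_order all_algebra.
From mathcomp Require Import all_classical all_reals all_analysis.
Set Implicit Arguments. Unset Strict Implicit. Unset Printing Implicit Defensive.
Import Order.TTheory GRing.Theory Num.Theory.
Local Open Scope classical_set_scope.
Local Open Scope ring_scope.

(* Finite nonempty types: a finType together with a point (the point only
   witnesses nonemptiness). *)
#[short(type="fpType")]
HB.structure Definition FinPointed := {T of Finite T & isPointed T}.

Section Defs.
Variable R : realType.

Definition is_dist (X : finType) (p : X -> R) : Prop :=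
  (forall x, 0 <= p x) /\ \sum_(x : X) p x = 1.

Record env := Env {
  eS : fpType;
  eA : fpType;
  eT : eS -> eA -> eS -> R;
  eI : eS -> R;
  eT_dist : forall s a, is_dist (eT s a);
  eI_dist : is_dist eI }.

Record policy (E : env) := Policy {
  pol :> eS E -> eA E -> R;
  pol_dist : forall s, is_dist (pol s) }.

(* Trajectories Xi = S x (A x S)^omega, with the product of discrete
   topologies.  xi = (s_0, w) with w t = (a_t, s_{t+1}). *)
Definition Xi (E : env) : Type :=
  (discrete_topology (eS E) *
   prod_topology (fun _ : nat => discrete_topology (eA E * eS E)))%type.

Definition XiM (E : env) := g_sigma_algebraType (@open (Xi E)).

Definition st (E : env) (xi : Xi E) (t : nat) : eS E :=
  match t with 0 => xi.1 | t'.+1 => (xi.2 t').2 end.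
Definition act (E : env) (xi : Xi E) (t : nat) : eA E := (xi.2 t).1.

(* P is the distribution of trajectories generated under pi:
   s_0 ~ I, a_t ~ pi(s_t), s_{t+1} ~ T(s_t,a_t)  (finite-dimensional
   cylinder probabilities, which determine the measure uniquely). *)
Definition traj_measure (E : env) (pi : policy E)
  (P : probability (XiM E) R) : Prop :=
  forall (n : nat) (ss : nat -> eS E) (aa : nat -> eA E),
    P [set xi : XiM E | forall t, (t <= n)%N ->
         st xi t = ss t /\ ((t < n)%N -> act xi t = aa t)] =
    (eI (ss 0%N) *
     \prod_(t < n) (pi (ss t) (aa t) * eT (ss t) (aa t) (ss t.+1)))%:E.

Definition pref (E : env) := policy E -> policy E -> Prop.

Definition total_preorder (E : env) (ge : pref E) : Prop :=
  (forall p, ge p p) /\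
  (forall p q r, ge p q -> ge q r -> ge p r) /\
  (forall p q, ge p q \/ ge q p).

Definition disc_return (E : env) (Rw : eS E -> eA E -> eS E -> R)
  (gamma : R) (xi : Xi E) : R :=
  limn (fun n => \sum_(t < n)
          gamma ^+ t * Rw (st xi t) (act xi t) (st xi t.+1)).

Definition J_ONMR (E : env) (Rw : eS E -> eA E -> eS E -> R) (f : R -> R)
  (gamma : R) (P : probability (XiM E) R) : R :=
  f (fine (\int[P]_(xi in [set: XiM E]) (disc_return Rw gamma xi)%:E)%E).

Definition in_Ord_ONMR (E : env) (ge : pref E) : Prop :=
  exists (Rw : eS E -> eA E -> eS E -> R) (f : R -> R) (gamma : R),
    0 <= gamma < 1 /\
    forall (p1 p2 : policy E) (P1 P2 : probability (XiM E) R),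
      traj_measure p1 P1 -> traj_measure p2 P2 ->
      (ge p1 p2 <-> J_ONMR Rw f gamma P2 <= J_ONMR Rw f gamma P1).

Definition in_Ord_FTR (E : env) (ge : pref E) : Prop :=
  exists f : XiM E -> R,
    measurable_fun [set: XiM E] f /\
    (forall (p : policy E) (P : probability (XiM E) R),
       traj_measure p P -> P.-integrable [set: XiM E] (EFin \o f)) /\
    forall (p1 p2 : policy E) (P1 P2 : probability (XiM E) R),
      traj_measure p1 P1 -> traj_measure p2 P2 ->
      (ge p1 p2 <->
       (\int[P2]_(xi in [set: XiM E]) (f xi)%:E <=
        \int[P1]_(xi in [set: XiM E]) (f xi)%:E)%E).

End Defs.

(* Main.v *)
Require Import Defs.
From HB Require Import structures.
From mathcomp Require Import all_boot all_order all_algebra.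
From mathcomp Require Import all_classical all_reals all_analysis.
From mathcomp Require Import lra.

HB.instance Definition _ := isPointed.Build bool true.
Import Order.TTheory GRing.Theory Num.Theory.
Local Open Scope classical_set_scope.
Local Open Scope ring_scope.

Section S.
Variable R : realType.
Variable E : env R.

Lemma cont_fst : continuous (fun xi : Xi E => xi.1).
Proof. by move=> [a b]; apply: cvg_fst. Qed.
Lemma cont_snd : continuous (fun xi : Xi E => xi.2).
Proof. by move=> [a b]; apply: cvg_snd. Qed.
Lemma cont_w t : continuous (fun xi : Xi E => xi.2 t).
Proof.
move=> x. apply: (@continuous_comp _ _ _ (fun xi : Xi E => xi.2) (proj t)).
  exact: cont_snd.
exact: proj_continuous.
Qed.

Lemma open_st t (B : set (eS E)) : open [set xi : Xi E | B (st xi t)].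
Proof.
case: t => [|t] /=.
  have -> : [set xi : Xi E | B xi.1] = (fun xi : Xi E => xi.1) @^-1` (B : set (discrete_topology (eS E))) by [].
  apply: open_comp; last exact: discrete_open.
  by move=> x _; apply: cont_fst.
have -> : [set xi : Xi E | B (xi.2 t).2] = (fun xi : Xi E => xi.2 t) @^-1` ((fun p : discrete_topology (eA E * eS E) => B p.2)) by [].
apply: open_comp; last exact: discrete_open.
by move=> x _; apply: cont_w.
Qed.

Lemma open_act t (B : set (eA E)) : open [set xi : Xi E | B (act xi t)].
Proof.
have -> : [set xi : Xi E | B (act xi t)] = (fun xi : Xi E => xi.2 t) @^-1` ((fun p : discrete_topology (eA E * eS E) => B p.1)) by [].
apply: open_comp; last exact: discrete_open.
by move=> x _; apply: cont_w.
Qed.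

Lemma meas_open (A : set (Xi E)) : open A -> measurable (A : set (XiM E)).
Proof. by move=> oA; apply: sub_gen_smallest. Qed.

End S.

Section Ex.
Variable R : realType.

Definition eTx (s a s' : bool) : R := (~~ s')%:R.
Definition eIx (s : bool) : R := s%:R.

Lemma eTx_dist s a : is_dist (eTx s a).
Proof. split; first by move=> x; rewrite /eTx ler0n. by rewrite big_bool /eTx /= add0r. Qed.
Lemma eIx_dist : is_dist eIx.
Proof. split; first by move=> x; rewrite /eIx ler0n. by rewrite big_bool /eIx /= addr0. Qed.

Definition Ex : env R := @Env R bool bool eTx eIx eTx_dist eIx_dist.

Definition gq (x : R) := x * (1 - x).
Definition gex : pref Ex := fun p1 p2 => gq (p2 true true) <= gq (p1 true true).

Lemma gex_tp : total_preorder gex.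
Proof.
rewrite /gex; split; first by move=> p.
split; first by move=> p q r h1 h2; apply: le_trans h2 h1.
by move=> p q; case/orP: (le_total (gq (q true true)) (gq (p true true))); auto.
Qed.


Lemma cyl1 (ss : nat -> bool) (aa : nat -> bool) :
  [set xi : XiM Ex | forall t, (t <= 1)%N -> st xi t = ss t /\ ((t < 1)%N -> act xi t = aa t)] =
  [set xi : Xi Ex | st xi 0 = ss 0%N] `&` [set xi : Xi Ex | act xi 0 = aa 0%N] `&` [set xi : Xi Ex | st xi 1 = ss 1%N].
Proof.
apply/seteqP; split => xi /=.
  move=> H; have [h0 h0'] := H 0%N isT; have [h1 _] := H 1%N isT.
  by split; [split|]; [|apply: h0'|].
move=> [[h0 h0'] h1] [|[|t]] //= _; by split.
Qed.

Lemma cyl1_meas ss aa : measurable [set xi : XiM Ex | forall t, (t <= 1)%N -> st xi t = ss t /\ ((t < 1)%N -> act xi t = aa t)].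
Proof.
rewrite cyl1; apply: meas_open.
apply: openI; [apply: openI|].
- exact: (@open_st _ Ex 0 (fun s => s = ss 0%N)).
- exact: (@open_act _ Ex 0 (fun s => s = aa 0%N)).
- exact: (@open_st _ Ex 1 (fun s => s = ss 1%N)).
Qed.

Lemma PA_val (pi : policy Ex) (P : probability (XiM Ex) R) :
  traj_measure pi P -> P [set xi : XiM Ex | act xi 0 = true] = (pi true true)%:E.
Proof.
move=> HP.
set A := [set xi : XiM Ex | act xi 0 = true].
have mA : measurable A := @meas_open _ Ex _ (@open_act _ Ex 0 (fun a => a = true)).
pose ss := fun t : nat => t == 0%N.
have HT := HP 1%N ss (fun _ => true).
have HF := HP 1%N ss (fun _ => false).
rewrite big_ord1 /= /eIx /eTx /= mul1r mulr1 in HT.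
rewrite big_ord1 /= /eIx /eTx /= mul1r mulr1 in HF.
have sT : [set xi : XiM Ex | forall t, (t <= 1)%N -> st xi t = ss t /\ ((t < 1)%N -> act xi t = true)] `<=` A.
  by move=> xi H; have [_ h] := H 0%N isT; exact: (h isT).
have sF : [set xi : XiM Ex | forall t, (t <= 1)%N -> st xi t = ss t /\ ((t < 1)%N -> act xi t = false)] `<=` ~` A.
  move=> xi H; have [_ h] := H 0%N isT; have /= h1 := h isT; by rewrite /A /setC /= h1.
have le1 : ((pi (ss 0%N) true)%:E <= P A)%E.
  rewrite -HT; apply: le_measure sT; rewrite inE //; exact: cyl1_meas.
have le2 : ((pi (ss 0%N) false)%:E <= 1 - P A)%E.
  rewrite -HF -probability_setC //; apply: le_measure sF; rewrite inE //; [exact: cyl1_meas|exact: measurableC].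
have [d0 d1] := pol_dist pi true.
rewrite big_bool /= in d1.
have fA : P A \is a fin_num by apply: fin_num_measure.
rewrite -(fineK fA) in le1 le2 *.
rewrite lee_fin in le1; rewrite -EFinB lee_fin in le2.
congr EFin; apply/eqP; rewrite eq_le le1 andbT.
move: le2; have -> : pi true false = 1 - pi true true by rewrite -d1 addrC addrK.
by move=> h; lra.
Qed.

Definition Rwx : eS Ex -> eA Ex -> eS Ex -> R := fun s (a : bool) s' => a%:R.

Lemma disc_val (xi : Xi Ex) : disc_return Rwx 0 xi = (act xi 0)%:R.
Proof.
rewrite /disc_return; apply: norm_lim_near_cst.
exists 1%N => // n /= hn.
case: n hn => // n _; rewrite big_ord_recl expr0 mul1r big1 ?addr0 //.
by move=> i _; rewrite exprS !mul0r.
Qed.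

Lemma J_val (pi : policy Ex) (P : probability (XiM Ex) R) :
  traj_measure pi P ->
  fine (\int[P]_(xi in [set: XiM Ex]) (disc_return Rwx 0 xi)%:E)%E = pi true true.
Proof.
move=> HP.
set A := [set xi : XiM Ex | act xi 0 = true].
have mA : measurable A := @meas_open _ Ex _ (@open_act _ Ex 0 (fun a => a = true)).
have -> : (fun xi : XiM Ex => (disc_return Rwx 0 xi)%:E) = (fun xi => (\1_A xi)%:E).
  apply/funext => xi; rewrite disc_val indicE; congr (EFin _).
  case h: (act xi 0); [rewrite mem_set | rewrite memNset] => //.
  by rewrite /A /= h.
rewrite integral_indic // setIT. exact: (congr1 fine (PA_val _ _ HP)).
Qed.

Lemma onmr : in_Ord_ONMR gex.
Proof.
exists Rwx, gq, 0; split; first by rewrite lexx ltr01.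
move=> p1 p2 P1 P2 H1 H2.
by rewrite /J_ONMR (J_val _ _ H1) (J_val _ _ H2).
Qed.

Definition polx (p : R) : eS Ex -> eA Ex -> R :=
  fun (s a : bool) => if s then (if a then p else 1 - p) else a%:R.

Lemma polx_dist p : 0 <= p <= 1 -> forall s, is_dist (polx p s).
Proof.
move=> /andP[p0 p1] s; split.
  by move=> a; rewrite /polx; case: s; case: a => //; rewrite ?subr_ge0 ?ler0n.
by rewrite big_bool /polx; case: s => /=; rewrite ?subrKC ?addr0.
Qed.

Definition mkpol (p : R) (hp : 0 <= p <= 1) : policy Ex := @Policy R Ex (polx p) (polx_dist p hp).

Definition X (b : bool) : Xi Ex :=
  ((true : discrete_topology bool),
   (fun t : nat => (if t == 0%N then (b, false) else (true, false)) : discrete_topology (bool * bool))).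

Fixpoint okb (n : nat) (ss aa : nat -> bool) (b : bool) : bool :=
  match n with
  | 0%N => ss 0%N
  | m.+1 => [&& okb m ss aa b, aa m == (if m == 0%N then b else true) & ~~ ss m.+1]
  end.

Lemma okbP n ss aa b : okb n ss aa b <->
  (ss 0%N /\ forall t, (t < n)%N -> aa t = (if t == 0%N then b else true) /\ ss t.+1 = false).
Proof.
elim: n => [|n IH] /=; first by split => [->|[]].
split.
  move=> /and3P[/IH [h0 h] /eqP ha /negbTE hs]; split => // t.
  rewrite ltnS leq_eqVlt => /orP[/eqP ->|ht]; first by [].
  exact: h.
move=> [h0 h]; apply/and3P; split.
- by apply/IH; split => // t ht; apply: h; apply: ltnW.
- by have [-> _] := h n (ltnSn n).
- by have [_ ->] := h n (ltnSn n).
Qed.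

Definition Cyl n (ss : nat -> eS Ex) (aa : nat -> eA Ex) : set (XiM Ex) :=
  [set xi : XiM Ex | forall t, (t <= n)%N -> st xi t = ss t /\ ((t < n)%N -> act xi t = aa t)].

Lemma memX n ss aa b : Cyl n ss aa (X b) <-> okb n ss aa b.
Proof.
rewrite okbP; split.
  move=> H; split; first by have [<- _] := H 0%N isT.
  move=> t ht; have [h1 _] := H t.+1 ht; have [_ h3] := H t (ltnW ht).
  have := h3 ht; rewrite /act /= => <-; rewrite -h1 /st /=.
  by case: (t == 0%N).
move=> [h0 h] [|t] ht /=.
  split; first by [].
  by move=> h1; have [-> _] := h 0%N h1.
split; first by have [_ ->] := h t ht; case: (t == 0%N).
by move=> h1; have [-> _] := h t.+1 h1.
Qed.

Lemma prod_eq (p : R) (n : nat) (ss aa : nat -> bool) :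
  eIx (ss 0%N) * \prod_(t < n) (polx p (ss t) (aa t) * eTx (ss t) (aa t) (ss t.+1)) =
  p * (okb n ss aa true)%:R + (1 - p) * (okb n ss aa false)%:R.
Proof.
elim: n => [|n IH].
  by rewrite big_ord0 mulr1 /= /eIx -mulrDl subrKC mul1r.
rewrite big_ord_recr /= mulrA IH /polx /eTx.
case: n IH => [|m] IH.
  rewrite /=; case: (ss 0%N); case: (aa 0%N); case: (ss 1%N) => /=;
    by rewrite ?(mulr0, mulr1, mul0r, mul1r, addr0, add0r, subrKC).
have last b : okb m.+1 ss aa b -> ~~ ss m.+1 by move=> /and3P[].
case hs: (ss m.+1).
  have -> : okb m.+1 ss aa true = false by apply/negbTE/negP => /last; rewrite hs.
  have -> : okb m.+1 ss aa false = false by apply/negbTE/negP => /last; rewrite hs.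
  by rewrite /= !(mulr0, mul0r, addr0).
case: (okb m.+1 ss aa true); case: (okb m.+1 ss aa false); case: (aa m.+1); case: (ss m.+2) => /=;
    by rewrite ?(mulr0, mulr1, mul0r, mul1r, addr0, add0r).
Qed.

Lemma mem_Cyl n ss aa b : (X b \in Cyl n ss aa) = okb n ss aa b.
Proof. by apply/idP/idP => [/set_mem/memX|/memX/mem_set]. Qed.

Lemma h1 : 0 <= (1:R) <= 1. Proof. by apply/andP; split; lra. Qed.
Lemma h0 : 0 <= (0:R) <= 1. Proof. by apply/andP; split; lra. Qed.
Lemma hh : 0 <= (2^-1:R) <= 1.
Proof. by apply/andP; split; lra. Qed.

Definition pol1 := mkpol 1 h1.
Definition pol0 := mkpol 0 h0.
Definition polh := mkpol (2^-1) hh.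

Definition P1 : probability (XiM Ex) R := @dirac _ (XiM Ex) (X true) R.
Definition P0 : probability (XiM Ex) R := @dirac _ (XiM Ex) (X false) R.

Lemma traj1 : traj_measure pol1 P1.
Proof.
move=> n ss aa.
change (P1 (Cyl n ss aa) = (eIx (ss 0%N) * \prod_(t < n) (polx 1 (ss t) (aa t) * eTx (ss t) (aa t) (ss t.+1)))%:E).
by rewrite prod_eq /P1 /= diracE mem_Cyl subrr mul0r addr0 mul1r.
Qed.

Lemma traj0 : traj_measure pol0 P0.
Proof.
move=> n ss aa.
change (P0 (Cyl n ss aa) = (eIx (ss 0%N) * \prod_(t < n) (polx 0 (ss t) (aa t) * eTx (ss t) (aa t) (ss t.+1)))%:E).
by rewrite prod_eq /P0 /= diracE mem_Cyl subr0 mul0r add0r mul1r.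
Qed.

Definition Xm : bool -> XiM Ex := X.
Lemma mXm : measurable_fun [set: bool] Xm.
Proof. by move=> _ B _. Qed.
HB.instance Definition _ := isMeasurableFun.Build _ _ bool (XiM Ex) Xm mXm.

Definition Ph : probability (XiM Ex) R := distribution (bernoulli_prob (2^-1 : R)) Xm.

Lemma trajh : traj_measure polh Ph.
Proof.
move=> n ss aa.
change (Ph (Cyl n ss aa) = (eIx (ss 0%N) * \prod_(t < n) (polx (2^-1) (ss t) (aa t) * eTx (ss t) (aa t) (ss t.+1)))%:E).
rewrite prod_eq /Ph /= /distribution /pushforward bernoulli_probE; last exact: hh.
rewrite !diracE.
have E b : (b \in Xm @^-1` Cyl n ss aa) = okb n ss aa b by rewrite -mem_Cyl.
by rewrite !E -!EFinM -EFinD.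
Qed.

Lemma not_ftr : ~ in_Ord_FTR gex.
Proof.
move=> [f [mf [intf H]]].
have mf' := (measurable_realfun.measurable_EFinP _ f).2 mf.
have I1 : (\int[P1]_(xi in [set: XiM Ex]) (f xi)%:E = (f (X true))%:E)%E.
  by rewrite /P1 /= integral_dirac // diracT mul1e.
have I0 : (\int[P0]_(xi in [set: XiM Ex]) (f xi)%:E = (f (X false))%:E)%E.
  by rewrite /P0 /= integral_dirac // diracT mul1e.
have g1 : gex pol1 pol0 by rewrite /gex /gq /=; lra.
have g2 : gex pol0 pol1 by rewrite /gex /gq /=; lra.
have g3 : ~ gex pol0 polh by rewrite /gex /gq /=; lra.
have e1 := (proj1 (H _ _ _ _ traj1 traj0)) g1.
have e2 := (proj1 (H _ _ _ _ traj0 traj1)) g2.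
rewrite I1 I0 !lee_fin in e1 e2.
have ea : f (X true) = f (X false) by apply/eqP; rewrite eq_le e1 e2.
apply: g3; apply/(H _ _ _ _ traj0 trajh).
have Ih : (\int[Ph]_(xi in [set: XiM Ex]) (f xi)%:E = (f (X false))%:E)%E.
  have -> : Ph = distribution (bernoulli_prob (2^-1 : R)) Xm by [].
  rewrite /distribution integral_pushforward //; last first.
    have -> : (EFin \o f) \o Xm = EFin \o cst (f (X false)).
      by apply/funext => -[]; rewrite /= ?ea.
    exact: finite_measure_integrable_cst.
  have -> : (EFin \o f) \o Xm = cst (f (X false))%:E.
    by apply/funext => -[]; rewrite /= ?ea.
  rewrite integral_cst // preimage_setT [X in (_ * X)%E](_ : _ = 1%E) ?mule1 //. exact: probability_setT.
by rewrite Ih I0.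
Qed.

End Ex.

Theorem mainTheorem14 (R : realType) :
  exists (E : env R) (ge : pref E),
    total_preorder ge /\ in_Ord_ONMR ge /\ ~ in_Ord_FTR ge.
Proof.
exists (Ex R), (@gex R); split; first exact: gex_tp.
split; first exact: onmr.
exact: not_ftr.
Qed.
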